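(* Let $k$ be a field of characteristic $\neq 2$, and let $W=A\wr T$ be the wreath product of the abelian Lie algebras $A$ (basis $a_1,\dots,a_m$) and $T$ (basis $t_1,\dots,t_n$). Then $W$ has the presentation with generators $a_1,\dots,a_m,t_1,\dots,t_n$ and relations $[t_i,t_j]=0$ for $1\le i,j\le n$, and $[[a_k,t_{i_1},\dots,t_{i_r}],[a_l,t_{j_1},\dots,t_{j_s}]]=0$ for all $1\le k,l\le m$, all $r\ge 0$, $s\ge 0$ and all $i_1,\dots,i_r,j_1,\dots,j_s\in\{1,\dots,n\}$.
   Context: Left-normed brackets: $[y_1,\dots,y_n]=[[y_1,\dots,y_{n-1}],y_n]$ for $n>2$. Construction of $A\wr T$: $A$ and $T$ are finite-dimensional abelian Lie algebras over $k$ with bases $\{a_1,\dots,a_m\}$ and $\{t_1,\dots,t_n\}$. Let $U=U(T)=k[t_1,\dots,t_n]$ (the universal enveloping algebra of $T$) and let $B$ be the free right $U$-module with basis $\{a_1,\dots,a_m\}$; $B$ is a right Lie module over $T$ via the action of $T\subset U$. The wreath product is $W=A\wr T=B\oplus T$ (as vector spaces) with bracket $[b_1+s_1,b_2+s_2]=(b_1s_2-b_2s_1)+[s_1,s_2]$ for $b_i\in B$, $s_i\in T$, where $[s_1,s_2]=0$ as $T$ is abelian. Thus $[a_k,t_{i_1},\dots,t_{i_r}]$ corresponds to $a_k t_{i_1}\cdots t_{i_r}\in B$. *)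

(* Defs.v *)
From HB Require Import structures.
From mathcomp Require Import all_boot all_order all_algebra.
From mathcomp Require Import mpoly.
Set Implicit Arguments. Unset Strict Implicit. Unset Printing Implicit Defensive.
Import GRing.Theory.
Local Open Scope ring_scope.

Definition is_lie (k : fieldType) (L : lmodType k) (br : L -> L -> L) : Prop :=
  [/\ (forall (a : k) (x y z : L), br (a *: x + y) z = a *: br x z + br y z),
      (forall (a : k) (x y z : L), br x (a *: y + z) = a *: br x y + br x z),
      (forall x : L, br x x = 0)
    & (forall x y z : L, br x (br y z) + br y (br z x) + br z (br x y) = 0)].

Definition is_lie_hom (k : fieldType) (L1 L2 : lmodType k)
  (br1 : L1 -> L1 -> L1) (br2 : L2 -> L2 -> L2) (f : L1 -> L2) : Prop :=
  (forall (a : k) (x y : L1), f (a *: x + y) = a *: f x + f y) /\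
  (forall x y : L1, f (br1 x y) = br2 (f x) (f y)).

Definition lnbr (L : Type) (I : Type) (br : L -> L -> L) (y : I -> L)
  (x : L) (s : seq I) : L :=
  foldl (fun acc i => br acc (y i)) x s.

Definition wreath_relations (k : fieldType) (L : lmodType k) (m n : nat)
  (br : L -> L -> L) (x : 'I_m -> L) (y : 'I_n -> L) : Prop :=
  (forall i j : 'I_n, br (y i) (y j) = 0) /\
  (forall (p q : 'I_m) (s1 s2 : seq 'I_n),
      br (lnbr br y (x p) s1) (lnbr br y (x q) s2) = 0).

(* The wreath product W = A wr T = B (+) T, with B = U^m the free right
   U-module on a_1..a_m, U = k[t_1..t_n], and T = k^n. *)
Definition wreath (k : fieldType) (m n : nat) : lmodType k :=
  ({ffun 'I_m -> {mpoly k[n]}} * 'rV[k]_n)%type.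

Definition TtoU (k : fieldType) (n : nat) (s : 'rV[k]_n) : {mpoly k[n]} :=
  \sum_(i < n) s 0 i *: 'X_i.

(* [b1 + s1, b2 + s2] = (b1 s2 - b2 s1) + [s1, s2], with [s1, s2] = 0 *)
Definition wreath_br (k : fieldType) (m n : nat) (u v : wreath k m n)
  : wreath k m n :=
  ([ffun j => u.1 j * TtoU v.2 - v.1 j * TtoU u.2], 0).

Definition wreath_a (k : fieldType) (m n : nat) (p : 'I_m) : wreath k m n :=
  ([ffun j => if j == p then 1 else 0], 0).

Definition wreath_t (k : fieldType) (m n : nat) (i : 'I_n) : wreath k m n :=
  (0, delta_mx 0 i).

(* Main.v *)
Require Import Defs.
From HB Require Import structures.
From mathcomp Require Import all_boot all_order all_algebra.
From mathcomp Require Import mpoly.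
From mathcomp Require Import ring.
From Stdlib Require Import FunctionalExtensionality.
Set Implicit Arguments. Unset Strict Implicit. Unset Printing Implicit Defensive.
Import GRing.Theory.
Local Open Scope ring_scope.

Section LieFacts.
Variables (k : fieldType) (L : lmodType k) (br : L -> L -> L).
Hypothesis Hl : is_lie br.

Lemma brl0 z : br 0 z = 0.
Proof.
case: Hl => H1 _ _ _; have := H1 1 0 0 z.
rewrite !scale1r !addr0 => h; apply: (addrI (br 0 z)); by rewrite addr0 -h.
Qed.
Lemma brr0 z : br z 0 = 0.
Proof.
case: Hl => _ H1 _ _; have := H1 1 z 0 0.
rewrite !scale1r !addr0 => h; apply: (addrI (br z 0)); by rewrite addr0 -h.
Qed.
Lemma brlZ a u z : br (a *: u) z = a *: br u z.
Proof. by case: Hl => H1 _ _ _; have := H1 a u 0 z; rewrite addr0 brl0 addr0. Qed.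
Lemma brrZ a u z : br z (a *: u) = a *: br z u.
Proof. by case: Hl => _ H1 _ _; have := H1 a z u 0; rewrite addr0 brr0 addr0. Qed.
Lemma brlD u v z : br (u + v) z = br u z + br v z.
Proof. by case: Hl => H1 _ _ _; have := H1 1 u v z; rewrite !scale1r. Qed.
Lemma brrD u v z : br z (u + v) = br z u + br z v.
Proof. by case: Hl => _ H1 _ _; have := H1 1 z u v; rewrite !scale1r. Qed.
Lemma brlN u z : br (- u) z = - br u z.
Proof. by rewrite -scaleN1r brlZ scaleN1r. Qed.
Lemma brrN u z : br z (- u) = - br z u.
Proof. by rewrite -scaleN1r brrZ scaleN1r. Qed.
Lemma brlB u v z : br (u - v) z = br u z - br v z.
Proof. by rewrite brlD brlN. Qed.
Lemma brrB u v z : br z (u - v) = br z u - br z v.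
Proof. by rewrite brrD brrN. Qed.
Lemma brl_sum (I : Type) (r : seq I) (P : pred I) (F : I -> L) z :
  br (\sum_(i <- r | P i) F i) z = \sum_(i <- r | P i) br (F i) z.
Proof. exact: (big_morph (fun u => br u z) (fun u v => brlD u v z) (brl0 z)). Qed.
Lemma brr_sum (I : Type) (r : seq I) (P : pred I) (F : I -> L) z :
  br z (\sum_(i <- r | P i) F i) = \sum_(i <- r | P i) br z (F i).
Proof. exact: (big_morph (fun u => br z u) (fun u v => brrD u v z) (brr0 z)). Qed.
Lemma br_anti u v : br u v = - br v u.
Proof.
case: Hl => _ _ H3 _; have := H3 (u + v).
rewrite brlD !brrD !H3 add0r addr0 => /eqP; rewrite addr_eq0 => /eqP //.
Qed.
Lemma br_comm z a b : br a b = 0 -> br (br z a) b = br (br z b) a.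
Proof.
move=> hab; case: Hl => _ _ _ J; have := J a b z.
rewrite hab brr0 addr0 (br_anti a) (br_anti b (br z a)) (br_anti b z) brlN.
rewrite opprK => h; apply/eqP; by rewrite -subr_eq0 -oppr_eq0 opprB h.
Qed.
End LieFacts.


Section LinG.
Variables (k : fieldType) (L : lmodType k) (n : nat) (g : 'X_{1..n} -> L).

Definition LinG (q : {mpoly k[n]}) : L := \sum_(mm <- msupp q) q@_mm *: g mm.

Lemma LinG_any q r : uniq r -> {subset msupp q <= r} ->
  LinG q = \sum_(mm <- r) q@_mm *: g mm.
Proof.
move=> ur sub; rewrite [RHS](bigID (fun mm => mm \in msupp q)) /=.
rewrite [X in _ = _ + X]big1 ?addr0; last first.
  by move=> mm /memN_msupp_eq0 ->; rewrite scale0r.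
rewrite -big_filter /LinG; apply: perm_big; apply: uniq_perm.
- exact: msupp_uniq.
- exact: filter_uniq.
- by move=> mm; rewrite mem_filter; case h: (mm \in msupp q) => //=; rewrite sub.
Qed.

Lemma LinG_lin a q1 q2 : LinG (a *: q1 + q2) = a *: LinG q1 + LinG q2.
Proof.
set r := undup (msupp q1 ++ msupp q2 ++ msupp (a *: q1 + q2)).
have ur : uniq r by exact: undup_uniq.
rewrite (LinG_any (q := a *: q1 + q2) ur); last first.
  by move=> mm h; rewrite mem_undup !mem_cat h !orbT.
rewrite (LinG_any (q := q1) ur); last first.
  by move=> mm h; rewrite mem_undup !mem_cat h.
rewrite (LinG_any (q := q2) ur); last first.
  by move=> mm h; rewrite mem_undup !mem_cat h orbT.
rewrite scaler_sumr -big_split /=; apply: eq_bigr => mm _.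
by rewrite mcoeffD mcoeffZ scalerDl scalerA.
Qed.

Lemma LinG0 : LinG 0 = 0.
Proof. have := LinG_lin 1 0 0; rewrite !scale1r !addr0 => h; apply: (addrI (LinG 0)); by rewrite addr0 -h. Qed.

Lemma LinGD q1 q2 : LinG (q1 + q2) = LinG q1 + LinG q2.
Proof. by have := LinG_lin 1 q1 q2; rewrite !scale1r. Qed.
Lemma LinGZ a q : LinG (a *: q) = a *: LinG q.
Proof. by have := LinG_lin a q 0; rewrite !addr0 LinG0 addr0. Qed.
Lemma LinGN q : LinG (- q) = - LinG q.
Proof. by rewrite -(scaleN1r q) LinGZ scaleN1r. Qed.
Lemma LinGB q1 q2 : LinG (q1 - q2) = LinG q1 - LinG q2.
Proof. by rewrite LinGD LinGN. Qed.
Lemma LinG_sum (I : Type) (r : seq I) (P : pred I) (F : I -> {mpoly k[n]}) :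
  LinG (\sum_(i <- r | P i) F i) = \sum_(i <- r | P i) LinG (F i).
Proof. exact: (big_morph LinG LinGD LinG0). Qed.
Lemma LinG_X mm : LinG 'X_[mm] = g mm.
Proof. by rewrite /LinG msuppX big_seq1 mcoeffX eqxx scale1r. Qed.
End LinG.


Section Act.
Variables (k : fieldType) (L : lmodType k) (br : L -> L -> L) (n : nat) (y : 'I_n -> L).
Hypothesis Hl : is_lie br.
Hypothesis Hyy : forall i j, br (y i) (y j) = 0.

Definition D i z := br z (y i).

Lemma D_comm i j z : D i (D j z) = D j (D i z).
Proof. by rewrite /D (br_comm Hl z (Hyy j i)). Qed.

Lemma iterD_comm i j c z : D i (iter c (D j) z) = iter c (D j) (D i z).
Proof. by elim: c => //= c IH; rewrite D_comm IH. Qed.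

Definition actr (r : seq 'I_n) (mm : 'X_{1..n}) z :=
  foldr (fun j acc => iter (mm j) (D j) acc) z r.

Lemma actr_notin r mm i z : i \notin r -> actr r (mm + U_(i))%MM z = actr r mm z.
Proof.
elim: r => //= j r IH; rewrite in_cons negb_or => /andP [hij hr].
by rewrite IH // mnmDE mnm1E (negbTE hij) addn0.
Qed.

Lemma actr_in r mm i z : uniq r -> i \in r -> actr r (mm + U_(i))%MM z = D i (actr r mm z).
Proof.
elim: r => //= j r IH /andP [hj ur]; rewrite in_cons; case: eqP => [e _ | hne /= hir].
  by subst i; rewrite actr_notin // mnmDE mnm1E eqxx addn1.
rewrite IH // mnmDE mnm1E; move/eqP: hne; rewrite eq_sym => /negbTE ->.
by rewrite addn0 iterD_comm.
Qed.

Definition act mm z := actr (enum 'I_n) mm z.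

Lemma act_U mm i z : act (mm + U_(i))%MM z = D i (act mm z).
Proof. by rewrite /act actr_in ?enum_uniq ?mem_enum. Qed.

Lemma act0 z : act 0%MM z = z.
Proof. rewrite /act; elim: (enum 'I_n) => //= j r ->; by rewrite mnm0E. Qed.

Definition seqr (r : seq 'I_n) (mm : 'X_{1..n}) :=
  foldr (fun j s => s ++ nseq (mm j) j) [::] r.

Lemma lnbr_nseq z s c j : lnbr br y z (s ++ nseq c j) = iter c (D j) (lnbr br y z s).
Proof.
rewrite /lnbr foldl_cat; elim: c (foldl _ z s) => //= c IH acc.
by rewrite IH -iterSr.
Qed.

Lemma lnbr_seqr z r mm : lnbr br y z (seqr r mm) = actr r mm z.
Proof. by elim: r => //= j r IH; rewrite lnbr_nseq IH. Qed.

Lemma LinG_mulX z q i :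
  LinG (fun mm => act mm z) (q * 'X_i) = D i (LinG (fun mm => act mm z) q).
Proof.
rewrite {1}(mpolyE q) mulr_suml LinG_sum /D [in RHS]/LinG brl_sum //.
apply: eq_bigr => mm _; rewrite -scalerAl -mpolyXD LinGZ LinG_X act_U.
by rewrite /D brlZ.
Qed.
End Act.


Section W.
Variables (k : fieldType) (m n : nat).
Notation W := (wreath k m n).

Lemma W1Z a (u : W) : (a *: u).1 = a *: u.1. Proof. by []. Qed.
Lemma W2Z a (u : W) : (a *: u).2 = a *: u.2. Proof. by []. Qed.
Lemma W1D (u v : W) : (u + v).1 = u.1 + v.1. Proof. by []. Qed.
Lemma W2D (u v : W) : (u + v).2 = u.2 + v.2. Proof. by []. Qed.
Lemma W10 : (0 : W).1 = 0. Proof. by []. Qed.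
Lemma W20 : (0 : W).2 = 0. Proof. by []. Qed.
Lemma W_eta (u : W) : u = (u.1, u.2). Proof. by case: u. Qed.

Lemma TtoU_lin a s t : TtoU (a *: s + t) = a *: TtoU s + TtoU t :> {mpoly k[n]}.
Proof.
rewrite /TtoU scaler_sumr -big_split /=; apply: eq_bigr => i _.
by rewrite !mxE scalerDl scalerA.
Qed.
Lemma TtoU0 : TtoU (0 : 'rV[k]_n) = 0.
Proof. by rewrite /TtoU big1 // => i _; rewrite mxE scale0r. Qed.
Lemma TtoU_delta i : TtoU (delta_mx 0 i : 'rV[k]_n) = 'X_i.
Proof.
rewrite /TtoU (bigD1 i) //= big1 ?addr0; first by rewrite mxE !eqxx scale1r.
by move=> j hj; rewrite mxE eqxx /= (negbTE hj) scale0r.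
Qed.

Lemma wbr_lie : is_lie (@wreath_br k m n).
Proof.
split.
- move=> a u v w; rewrite /wreath_br; congr (_, _); rewrite ?W1Z ?W2Z ?W1D ?W2D /=.
    apply/ffunP => j; rewrite !ffunE TtoU_lin.
    rewrite -!mul_mpolyC; ring.
  by rewrite scaler0 addr0.
- move=> a u v w; rewrite /wreath_br; congr (_, _); rewrite ?W1Z ?W2Z ?W1D ?W2D /=.
    apply/ffunP => j; rewrite !ffunE TtoU_lin.
    rewrite -!mul_mpolyC; ring.
  by rewrite scaler0 addr0.
- move=> u; rewrite /wreath_br; congr (_, _).
  by apply/ffunP => j; rewrite !ffunE subrr.
- move=> u v w; rewrite /wreath_br /=.
  rewrite TtoU0; congr (_, _); rewrite ?W1D ?W2D /=; last by rewrite !addr0.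
  apply/ffunP => j; rewrite !ffunE; ring.
Qed.

Notation wbr := (@wreath_br k m n).
Notation wt := (@wreath_t k m n).

Lemma W_eq (u v : W) : u.1 = v.1 -> u.2 = v.2 -> u = v.
Proof. by case: u; case: v => ? ? ? ? /= -> ->. Qed.

Lemma ffun0 (j : 'I_m) : (0 : {ffun 'I_m -> {mpoly k[n]}}) j = 0.
Proof. by rewrite ffunE. Qed.

Lemma wbr2 u v : (wbr u v).2 = 0. Proof. by []. Qed.

Lemma wbr_B (u v : W) : u.2 = 0 -> v.2 = 0 -> wbr u v = 0.
Proof.
move=> hu hv; apply: W_eq => //=; apply/ffunP => j.
by rewrite !ffunE hu hv TtoU0 !mulr0 subrr.
Qed.

Lemma lnbrW2 z s : z.2 = 0 -> (lnbr wbr wt z s).2 = 0.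
Proof. by elim: s z => //= i s IH z hz; apply: IH. Qed.

Lemma W_rel : wreath_relations wbr (@wreath_a k m n) wt.
Proof.
split.
  move=> i j; apply: W_eq => //=; apply/ffunP => p; rewrite !ffunE.
  by rewrite !mul0r subrr.
by move=> p q s1 s2; apply: wbr_B; apply: lnbrW2.
Qed.

Definition E p (q : {mpoly k[n]}) : W := ([ffun j => if j == p then q else 0], 0).

Lemma ED p q1 q2 : E p (q1 + q2) = E p q1 + E p q2.
Proof.
apply: W_eq => /=; last by rewrite addr0.
by apply/ffunP => j; rewrite !ffunE; case: (j == p); rewrite ?addr0.
Qed.
Lemma EZ p a q : E p (a *: q) = a *: E p q.
Proof.
apply: W_eq => /=; last by rewrite scaler0.
by apply/ffunP => j; rewrite !ffunE; case: (j == p); rewrite ?scaler0.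
Qed.
Lemma E0 p : E p 0 = 0.
Proof. by apply: W_eq => //=; apply/ffunP => j; rewrite !ffunE; case: (j == p). Qed.
Lemma E_sum p (I : Type) (r : seq I) (P : pred I) (F : I -> {mpoly k[n]}) :
  E p (\sum_(i <- r | P i) F i) = \sum_(i <- r | P i) E p (F i).
Proof. exact: (big_morph (E p) (ED p) (E0 p)). Qed.

Lemma wbr_Et p q i : wbr (E p q) (wt i) = E p (q * 'X_i).
Proof.
apply: W_eq => //=; apply/ffunP => j; rewrite !ffunE TtoU_delta TtoU0 mulr0 subr0.
by case: (j == p); rewrite ?mul0r.
Qed.

Lemma lnbr_E p q s : lnbr wbr wt (E p q) s = E p (q * \prod_(i <- s) 'X_i).
Proof.
elim: s q => [|i s IH] q /=; first by rewrite big_nil mulr1.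
by rewrite wbr_Et IH big_cons mulrA.
Qed.

Lemma wa_E p : @wreath_a k m n p = E p 1. Proof. by []. Qed.

Lemma prod_seqr r mm : \prod_(i <- seqr r mm) ('X_i : {mpoly k[n]}) = \prod_(j <- r) 'X_j ^+ mm j.
Proof.
elim: r => [|j r IH] /=; first by rewrite !big_nil.
rewrite big_cat IH big_cons mulrC; congr (_ * _).
elim: (mm j) => [|c IHc] /=; first by rewrite big_nil expr0.
by rewrite big_cons IHc exprS.
Qed.

Lemma lnbr_seqr_W p mm : lnbr wbr wt (@wreath_a k m n p) (seqr (enum 'I_n) mm) = E p 'X_[mm].
Proof. by rewrite wa_E lnbr_E mul1r prod_seqr big_enum /= mpolyXE_id. Qed.

Lemma W_decomp (u : W) : u = \sum_(p < m) E p (u.1 p) + \sum_(i < n) u.2 0 i *: wt i.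
Proof.
apply: W_eq.
  rewrite W1D (big_morph fst W1D W10) (big_morph fst W1D W10) /=.
  apply/ffunP => j; rewrite ffunE !sum_ffunE (bigD1 j) //= big1 ?addr0.
    rewrite big1 ?addr0 ?ffunE ?eqxx //.
    by move=> i _; rewrite scaler0 ffunE.
  by move=> i hij; rewrite ffunE eq_sym (negbTE hij).
rewrite W2D (big_morph snd W2D W20) (big_morph snd W2D W20) /=.
rewrite big1 ?add0r //; apply/rowP => j; rewrite summxE (bigD1 j) //= big1 ?addr0.
  rewrite !mxE !eqxx mulr1.
  by congr (u.2 _ j); apply: val_inj.
by move=> i hij; rewrite !mxE /= eq_sym (negbTE hij) /= mulr0.
Qed.
End W.


Section Main.
Variables (k : fieldType) (m n : nat) (L : lmodType k) (br : L -> L -> L).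
Variables (x : 'I_m -> L) (y : 'I_n -> L).
Hypothesis Hl : is_lie br.
Hypothesis Hrel : wreath_relations br x y.
Notation W := (wreath k m n).
Notation wbr := (@wreath_br k m n).
Notation wt := (@wreath_t k m n).
Notation wa := (@wreath_a k m n).

Let Hyy : forall i j, br (y i) (y j) = 0. Proof. by case: Hrel. Qed.
Let Hxx : forall p q s1 s2, br (lnbr br y (x p) s1) (lnbr br y (x q) s2) = 0.
Proof. by case: Hrel. Qed.

Definition Lp p q := LinG (fun mm => act br y mm (x p)) q.
Definition FB (b : {ffun 'I_m -> {mpoly k[n]}}) := \sum_(p < m) Lp p (b p).
Definition fT (s : 'rV[k]_n) := \sum_(i < n) s 0 i *: y i.
Definition f (u : W) := FB u.1 + fT u.2.

Lemma fT_lin a s t : fT (a *: s + t) = a *: fT s + fT t.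
Proof.
rewrite /fT scaler_sumr -big_split /=; apply: eq_bigr => i _.
by rewrite !mxE scalerDl scalerA.
Qed.
Lemma fT0 : fT 0 = 0.
Proof. by rewrite /fT big1 // => i _; rewrite mxE scale0r. Qed.
Lemma fT_delta i : fT (delta_mx 0 i) = y i.
Proof.
rewrite /fT (bigD1 i) //= big1 ?addr0; first by rewrite mxE !eqxx scale1r.
by move=> j hj; rewrite mxE eqxx /= (negbTE hj) scale0r.
Qed.

Lemma FB_lin a b c : FB (a *: b + c) = a *: FB b + FB c.
Proof.
rewrite /FB scaler_sumr -big_split /=; apply: eq_bigr => p _.
by rewrite !ffunE /Lp LinG_lin.
Qed.

Lemma f_lin a u v : f (a *: u + v) = a *: f u + f v.
Proof.
rewrite /f W1D W2D W1Z W2Z FB_lin fT_lin scalerDr.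
by rewrite -!addrA; congr (_ + _); rewrite addrCA.
Qed.

Lemma K p q s : Lp p (q * TtoU s) = br (Lp p q) (fT s).
Proof.
rewrite /TtoU mulr_sumr /Lp LinG_sum /fT brr_sum //; apply: eq_bigr => i _.
by rewrite -scalerAr LinGZ (LinG_mulX Hl Hyy) /D brrZ.
Qed.

Lemma Z0 p q mm mm' : br (act br y mm (x p)) (act br y mm' (x q)) = 0.
Proof. by rewrite /act -!lnbr_seqr Hxx. Qed.

Lemma Z1 b b' : br (FB b) (FB b') = 0.
Proof.
rewrite /FB brl_sum //; apply: big1 => p _.
rewrite brr_sum //; apply: big1 => q _.
rewrite /Lp /LinG brl_sum //; apply: big1 => mm _.
rewrite brr_sum //; apply: big1 => mm' _.
by rewrite brlZ // brrZ // Z0 !scaler0.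
Qed.

Lemma Z2 s s' : br (fT s) (fT s') = 0.
Proof.
rewrite /fT brl_sum //; apply: big1 => i _.
rewrite brr_sum //; apply: big1 => j _.
by rewrite brlZ // brrZ // Hyy !scaler0.
Qed.

Lemma f_hom u v : f (wbr u v) = br (f u) (f v).
Proof.
rewrite /f /= fT0 addr0 /FB.
have e : forall p, Lp p ([ffun j => u.1 j * TtoU v.2 - v.1 j * TtoU u.2] p)
   = br (Lp p (u.1 p)) (fT v.2) - br (Lp p (v.1 p)) (fT u.2).
  by move=> p; rewrite ffunE -!K /Lp LinGB.
rewrite (eq_bigr _ (fun p _ => e p)) sumrB -!(brl_sum Hl).
rewrite !(brlD Hl) !(brrD Hl) Z1 Z2 add0r addr0 (br_anti Hl (fT u.2)).
by rewrite addrC.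
Qed.

Lemma f_a p : f (wa p) = x p.
Proof.
rewrite /f /= fT0 addr0 /FB (bigD1 p) //= big1 ?addr0.
  by rewrite ffunE eqxx /Lp -mpolyX0 LinG_X act0.
by move=> q hq; rewrite ffunE (negbTE hq) /Lp LinG0.
Qed.

Lemma f_t i : f (wt i) = y i.
Proof.
rewrite /f /= fT_delta /FB big1 ?add0r // => p _.
by rewrite ffunE /Lp LinG0.
Qed.

End Main.



Section Uniq.
Variables (k : fieldType) (m n : nat) (L : lmodType k) (br : L -> L -> L).
Notation W := (wreath k m n).
Notation wbr := (@wreath_br k m n).
Notation wt := (@wreath_t k m n).
Notation wa := (@wreath_a k m n).

Section Lin.
Variable h : W -> L.
Hypothesis hl : forall a u v, h (a *: u + v) = a *: h u + h v.
Lemma h0 : h 0 = 0.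
Proof. have := hl 1 0 0; rewrite !scale1r !addr0 => e; apply: (addrI (h 0)); by rewrite addr0 -e. Qed.
Lemma hD u v : h (u + v) = h u + h v.
Proof. by have := hl 1 u v; rewrite !scale1r. Qed.
Lemma hZ a u : h (a *: u) = a *: h u.
Proof. by have := hl a u 0; rewrite !addr0 h0 addr0. Qed.
Lemma h_sum (I : Type) (r : seq I) (P : pred I) (F : I -> W) :
  h (\sum_(i <- r | P i) F i) = \sum_(i <- r | P i) h (F i).
Proof. exact: (big_morph h hD h0). Qed.
End Lin.

Lemma hom_lnbr (h : W -> L) (y' : 'I_n -> L) : is_lie_hom wbr br h -> (forall i, h (wt i) = y' i) ->
  forall z s, h (lnbr wbr wt z s) = lnbr br y' (h z) s.
Proof.
move=> [_ hh] hy z s; elim: s z => //= i s IH z.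
by rewrite IH hh hy.
Qed.

Lemma agree (h1 h2 : W -> L) :
  (forall a u v, h1 (a *: u + v) = a *: h1 u + h1 v) ->
  (forall a u v, h2 (a *: u + v) = a *: h2 u + h2 v) ->
  (forall p mm, h1 (E p 'X_[mm]) = h2 (E p 'X_[mm])) ->
  (forall i, h1 (wt i) = h2 (wt i)) -> forall u, h1 u = h2 u.
Proof.
move=> l1 l2 hE ht u; rewrite (W_decomp u) (hD l1) (hD l2) !(h_sum l1) !(h_sum l2).
congr (_ + _); apply: eq_bigr => i _.
  rewrite (mpolyE (u.1 i)) E_sum (h_sum l1) (h_sum l2); apply: eq_bigr => mm _.
  by rewrite EZ (hZ l1) (hZ l2) hE.
by rewrite (hZ l1) (hZ l2) ht.
Qed.
End Uniq.

Unset Implicit Arguments.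

Theorem corollary2 (k : fieldType) (m n : nat) (hchar : (2%:R : k) != 0) :
  is_lie (@wreath_br k m n) /\
  wreath_relations (@wreath_br k m n) (@wreath_a k m n) (@wreath_t k m n) /\
  (forall (L : lmodType k) (br : L -> L -> L) (x : 'I_m -> L) (y : 'I_n -> L),
     is_lie br -> wreath_relations br x y ->
     exists! f : wreath k m n -> L,
       is_lie_hom (@wreath_br k m n) br f /\
       (forall p, f (@wreath_a k m n p) = x p) /\
       (forall i, f (@wreath_t k m n i) = y i)).
Proof.
split; first exact: wbr_lie.
split; first exact: W_rel.
move=> L br x y Hl Hrel.
have fh : is_lie_hom (@wreath_br k m n) br (f br x y).
  split; [exact: f_lin | exact: f_hom Hl Hrel].
exists (f br x y); split.
  split; first exact: fh.
  split; [exact: f_a | exact: f_t].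
move=> g [gh [ga gt]]; apply: functional_extensionality.
apply: agree.
- exact: f_lin.
- by case: gh.
- move=> p mm; rewrite -lnbr_seqr_W.
  rewrite (hom_lnbr fh (f_t br x y)) (hom_lnbr gh gt) f_a ga //.
- by move=> i; rewrite f_t gt.
Qed.
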